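(* Let $\Phi=\{\varphi_i\}_{i\in\Lambda}$ be a similarity IFS in $\mathbb{R}^d$ and let $F\subset\mathbb{R}^d$ be a nonempty compact set with $\varphi_iF\subseteq F$ for every $i\in\Lambda$. Then $\Phi$ is $(F,c)$-diffuse for some $c>0$ if and only if for every affine hyperplane $\mathcal{L}\subseteq\mathbb{R}^d$ there exists $i\in\Lambda$ with $\varphi_iF\cap\mathcal{L}=\emptyset$.
   Context: A similarity IFS is a finite family of contracting similarities of $\mathbb{R}^d$. $\Phi$ is $(F,c)$-diffuse if for every affine hyperplane $\mathcal{L}$ there is $i\in\Lambda$ with $\varphi_iF\cap\mathcal{L}^{(c)}=\emptyset$, $\mathcal{L}^{(c)}$ denoting the open $c$-neighborhood of $\mathcal{L}$. *)

(* Defs.v *)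
From mathcomp Require Import all_boot all_order all_algebra.
From mathcomp Require Import all_classical all_reals all_analysis.
Set Implicit Arguments. Unset Strict Implicit. Unset Printing Implicit Defensive.
Import Order.TTheory GRing.Theory Num.Theory.
Local Open Scope ring_scope.
Local Open Scope classical_set_scope.

Definition edist {R : realType} {d : nat} (x y : 'rV[R]_d) : R :=
  Num.sqrt (\sum_(i < d) (x 0 i - y 0 i) ^+ 2).

Definition contracting_similarity {R : realType} {d : nat}
  (f : 'rV[R]_d -> 'rV[R]_d) : Prop :=
  exists r : R, 0 < r < 1 /\ forall x y, edist (f x) (f y) = r * edist x y.

Definition affine_hyperplane {R : realType} {d : nat} (L : set 'rV[R]_d) : Prop :=
  exists (a : 'rV[R]_d) (b : R), a != 0 /\
    L = [set x | \sum_(i < d) a 0 i * x 0 i = b].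

Definition open_nbhd {R : realType} {d : nat} (L : set 'rV[R]_d) (c : R)
  : set 'rV[R]_d :=
  [set x | exists2 y, L y & edist x y < c].

Definition diffuse {R : realType} {d : nat} {I : finType}
  (phi : I -> 'rV[R]_d -> 'rV[R]_d) (F : set 'rV[R]_d) (c : R) : Prop :=
  forall L : set 'rV[R]_d, affine_hyperplane L ->
    exists i : I, (phi i @` F) `&` open_nbhd L c = set0.

(* Main.v *)
From HB Require Import structures.
Require Import Defs.
From mathcomp Require Import all_boot all_order all_algebra.
From mathcomp Require Import all_classical all_reals all_analysis.
From mathcomp Require Import lra ring.
Import Order.TTheory GRing.Theory Num.Theory.
Import numFieldNormedType.Exports.
Local Open Scope ring_scope.
Local Open Scope classical_set_scope.

Set Implicit Arguments. Unset Strict Implicit.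
Section Helpers.
Variables (R : realType) (d : nat).

Definition dot (a x : 'rV[R]_d) : R := \sum_(j < d) a 0 j * x 0 j.

Lemma dot_bound (a z : 'rV[R]_d) (A Z : R) :
  (forall j, `|a 0 j| <= A) -> (forall j, `|z 0 j| <= Z) ->
  `|dot a z| <= d%:R * (A * Z).
Proof.
move=> Ha Hz; rewrite /dot; apply: le_trans (ler_norm_sum _ _ _) _.
have -> : d%:R * (A * Z) = \sum_(j < d) (A * Z).
  by rewrite sumr_const card_ord mulr_natl.
apply: ler_sum => j _; rewrite normrM; apply: ler_pM => //.
Qed.

Lemma dotB (a x y : 'rV[R]_d) : dot a x - dot a y = dot a (x - y).
Proof.
rewrite /dot -sumrB; apply: eq_bigr => j _; by rewrite !mxE mulrBr.
Qed.

Lemma dotBl (a a' y : 'rV[R]_d) : dot a y - dot a' y = dot (a - a') y.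
Proof.
rewrite /dot -sumrB; apply: eq_bigr => j _; by rewrite !mxE mulrBl.
Qed.

Lemma dotZ (k : R) (a x : 'rV[R]_d) : dot (k *: a) x = k * dot a x.
Proof.
rewrite /dot mulr_sumr; apply: eq_bigr => j _; by rewrite !mxE mulrA.
Qed.

Lemma edist_ge_entry (x y : 'rV[R]_d) j : `|x 0 j - y 0 j| <= Defs.edist x y.
Proof.
rewrite /Defs.edist -sqrtr_sqr; apply: ler_wsqrtr.
rewrite (bigD1 j) //= lerDl; apply: sumr_ge0 => k _; exact: sqr_ge0.
Qed.

Lemma edist_le (x y : 'rV[R]_d) (m : R) : 0 <= m ->
  (forall j, `|x 0 j - y 0 j| <= m) -> Defs.edist x y <= d%:R * m.
Proof.
move=> m0 H; rewrite /Defs.edist.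
rewrite -(ger0_norm (_ : 0 <= d%:R * m)); last by apply: mulr_ge0.
rewrite -sqrtr_sqr; apply: ler_wsqrtr.
apply: le_trans (_ : \sum_(j < d) m ^+ 2 <= _).
  apply: ler_sum => j _; rewrite -real_normK ?num_real //.
  by apply: lerXn2r => //; rewrite ?nnegrE.
rewrite sumr_const card_ord -mulr_natl.
case: d => [|n]; first by rewrite mul0r mul0r expr0n /=.
have h1 : 1 <= n.+1%:R :> R by rewrite ler1n.
have hm : 0 <= m ^+ 2 by exact: sqr_ge0.
rewrite exprMn; set D := n.+1%:R in h1 *; set m2 := m ^+ 2 in hm *.
rewrite expr2; nra.
Qed.

Lemma edist_xx (x : 'rV[R]_d) : Defs.edist x x = 0.
Proof. by rewrite /Defs.edist big1 ?sqrtr0 // => j _; rewrite subrr expr0n. Qed.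

Lemma entry_le_norm (x : 'rV[R^o]_d) j : `|x 0 j| <= `|x|.
Proof.
have /mapP[k Hk ->] : `|x ord0 j| \in [seq `|x u.1 u.2| | u : 'I_1 * 'I_d].
  by apply/mapP; exists (ord0, j) => //=; rewrite mem_enum.
by rewrite [leRHS]/Num.Def.normr /= mx_normrE; apply/bigmax_geP; right => /=; exists k.
Qed.

Lemma inv_mono (k m : nat) : (k <= m)%N -> (m.+1%:R)^-1 <= (k.+1%:R : R)^-1.
Proof. by move=> km; rewrite lef_pV2 ?posrE ?ltr0Sn // ler_nat ltnS. Qed.

Lemma exists_inv_lt (e : R) : 0 < e -> exists n : nat, (n.+1%:R)^-1 < e.
Proof.
move=> e0; exists (Num.truncn (e^-1)).
rewrite -[X in _ < X]invrK ltf_pV2 ?posrE ?invr_gt0 ?ltr0Sn //; exact: truncnS_gt.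
Qed.

End Helpers.

Lemma seq_ub (s : seq nat) : exists N, forall n, n \in s -> (n <= N)%N.
Proof.
elim: s => [|a s [N HN]]; first by exists 0%N.
exists (maxn a N) => n; rewrite inE => /orP[/eqP->|/HN h]; first exact: leq_maxl.
exact: leq_trans h (leq_maxr _ _).
Qed.

Lemma cover_nat (T : ptopologicalType) (A : set T) (V : nat -> set T) :
  compact A -> (forall n, open (V n)) -> (forall n m, (n <= m)%N -> V n `<=` V m) ->
  A `<=` \bigcup_n V n -> exists N, A `<=` V N.
Proof.
move=> cA oV mV cov.
move: cA; rewrite compact_cover => cA.
have := cA nat setT V (fun n _ => oV n).
case.
  by move=> x /cov [n _ Vx]; exists n.
move=> D' _ HD'.
have [N HN] := seq_ub (finmap.enum_fset D').
exists N => x /HD' [n Dn Vn]; apply: (mV n) => //; exact: HN.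
Qed.

Unset Implicit Arguments. Set Strict Implicit.

HB.saturate prod.

Theorem proposition3p10 (R : realType) (d : nat) (I : finType)
  (phi : I -> 'rV[R]_d -> 'rV[R]_d) (F : set 'rV[R]_d) :
  (forall i, contracting_similarity (phi i)) ->
  F !=set0 -> compact (F : set 'rV[R^o]_d) ->
  (forall i, phi i @` F `<=` F) ->
  ((exists c : R, 0 < c /\ diffuse phi F c) <->
   (forall L : set 'rV[R]_d, affine_hyperplane L ->
      exists i : I, (phi i @` F) `&` L = set0)).
Proof.
move=> Hsim Fne Fc Hinv; split.
  move=> [c [c0 Hd]] L HL; have [i Hi] := Hd L HL; exists i.
  rewrite -subset0 => y [Fy Ly]; rewrite -Hi; split => //.
  by exists y => //; rewrite edist_xx.
move=> H.
have [M [M0 HM]] : exists M : R, 0 < M /\ forall x, F x -> forall j, `|x 0 j| <= M.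
  have := compact_bounded Fc => -[M0 [M0r HM0]].
  exists (`|M0| + 1); split; first by rewrite ltr_pwDr ?normr_ge0.
  move=> x Fx j; apply: le_trans (entry_le_norm (x : 'rV[R^o]_d) j) _.
  apply: (HM0 (`|M0| + 1)) => //.
  by apply: le_lt_trans (real_ler_norm M0r) _; rewrite ltrDl.
pose D : R := d%:R.
have D0 : 0 <= D by rewrite /D ler0n.
pose B := D * (M + 1).
pose P := [set p : 'rV[R^o]_d * R | `|p.1| = 1 /\ `|p.2| <= B].
pose W := fun n : nat => [set p : 'rV[R^o]_d * R | exists i, forall x, F x ->
   (n.+1%:R)^-1 < `|dot p.1 (phi i x) - p.2| ].
have Pc : compact P.
  have -> : P = [set a : 'rV[R^o]_d | `|a| = 1] `*` [set b : R | `|b| <= B] by [].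
  have -> : [set b : R | `|b| <= B] = `[-B, B]%classic.
    by apply/seteqP; split => b /=; rewrite in_itv /= ler_norml.
  apply: compact_setX; last exact: segment_compact.
  apply: bounded_closed_compact.
    exists 1; split => // r r1 a /= ->; exact: ltW.
  have -> : [set a : 'rV[R^o]_d | `|a| = 1] = Num.Def.normr @^-1` [set 1] by [].
  apply: (proj1 (continuous_closedP _)); first exact: norm_continuous.
  exact: closed_eq.
have Wmono : forall n m, (n <= m)%N -> W n `<=` W m.
  move=> n m nm p [i Hi]; exists i => x Fx.
  exact: le_lt_trans (inv_mono R nm) (Hi x Fx).
have cov : P `<=` \bigcup_n (W n)°.
  move=> [a b] [/= a1 bB].
  have a0 : a != 0.
    by apply/eqP => a0; move: a1; rewrite a0 normr0 => /eqP; rewrite eq_sym oner_eq0.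
  have hL : affine_hyperplane [set x : 'rV[R]_d | dot a x = b].
    by exists a, b; split.
  have [i Hi] := H _ hL.
  have ha : forall j, `|a 0 j| <= 1 by move=> j; rewrite -a1; exact: entry_le_norm.
  have [r [/andP [r0 r1] Hr]] := Hsim i.
  pose Vf := fun k : nat => [set x : 'rV[R^o]_d | (k.+1%:R)^-1 < `|dot a (phi i x) - b|].
  have [K HK] : exists K, F `<=` (Vf K)°.
    apply: cover_nat => //.
    - move=> k; exact: open_interior.
    - move=> k m km; apply: interiorS => x /=; apply: le_lt_trans; exact: inv_mono.
    move=> x Fx.
    set v := `|dot a (phi i x) - b|.
    have v0 : 0 < v.
      rewrite normr_gt0 subr_eq0; apply/negP => /eqP e.
      have : ([set phi i x | x in F] `&` [set x | dot a x = b]) (phi i x).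
        by split => //; exists x.
      by rewrite Hi.
    have [k Hk] := exists_inv_lt (divr_gt0 v0 (ltr0Sn R 1)).
    exists k => //; rewrite /interior; apply/nbhs_ballP.
    pose eta := v / (2 * (D * D + 1)).
    have eta0 : 0 < eta by rewrite divr_gt0 // mulr_gt0 // ltr_pwDr // mulr_ge0.
    exists eta => // x' Bx'.
    have ex : forall j, `|x 0 j - x' 0 j| <= eta.
      by move=> j; move: Bx' => [_ /(_ 0 j)]; rewrite /ball /= => /ltW.
    have ed : Defs.edist x x' <= D * eta := edist_le (ltW eta0) ex.
    have ed2 : Defs.edist (phi i x) (phi i x') <= D * eta.
      rewrite Hr; apply: le_trans ed; apply: ler_piMl => //; last exact: ltW.
      exact: sqrtr_ge0.
    have hdot : `|dot a (phi i x) - dot a (phi i x')| <= D * (1 * (D * eta)).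
      rewrite dotB; apply: dot_bound => // j; rewrite !mxE.
      exact: le_trans (edist_ge_entry _ _ j) ed2.
    have key : D * (1 * (D * eta)) <= v / 2.
      have -> : v / 2 = (D * D + 1) * eta.
        rewrite /eta; field; apply/negP; rewrite paddr_eq0 ?mulr_ge0 //.
        by rewrite oner_eq0 andbF.
      rewrite mul1r mulrA ler_wpM2r ?ltW //; lra.
    have := lerB_dist (dot a (phi i x) - b) (dot a (phi i x) - dot a (phi i x')).
    have -> : dot a (phi i x) - b - (dot a (phi i x) - dot a (phi i x')) =
      dot a (phi i x') - b by ring.
    rewrite /Vf /= -/v => hh.
    have h3 := le_trans hdot key.
    apply: lt_le_trans Hk (le_trans _ hh).
    move: h3; set t := `|dot a (phi i x) - _|; clearbody v t; move=> h3; lra.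
  have fK : forall x, F x -> (K.+1%:R)^-1 < `|dot a (phi i x) - b|.
    by move=> x Fx; exact: interior_subset (HK x Fx).
  set del := (K.+1%:R)^-1 in fK.
  have del0 : 0 < del by rewrite /del invr_gt0 ltr0Sn.
  have [n Hn] := exists_inv_lt (divr_gt0 del0 (ltr0Sn R 1)).
  exists n => //; rewrite /interior; apply/nbhs_ballP.
  pose eta := del / (2 * (D * M + 1)).
  have DM0 : 0 < D * M + 1 by rewrite ltr_pwDr // mulr_ge0 // ltW.
  have eta0 : 0 < eta by rewrite divr_gt0 // mulr_gt0.
  exists eta => // -[a' b'] [/= Ba Bb].
  exists i => x Fx.
  have Fy : F (phi i x) by apply: Hinv; exists x.
  have ea : forall j, `|(a - a') 0 j| <= eta.
    by move=> j; move: Ba => [_ /(_ 0 j)]; rewrite /ball /= !mxE => /ltW.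
  have hb : `|b - b'| < eta by move: Bb; rewrite /ball.
  have hdot : `|dot a (phi i x) - dot a' (phi i x)| <= D * (eta * M).
    by rewrite dotBl; apply: dot_bound => // j; exact: HM.
  have key : D * (eta * M) + eta = del / 2.
    by rewrite /eta; field; rewrite (gt_eqF DM0).
  have := lerB_dist (dot a (phi i x) - b) (dot a (phi i x) - dot a' (phi i x) + (b' - b)).
  have -> : dot a (phi i x) - b - (dot a (phi i x) - dot a' (phi i x) + (b' - b)) =
      dot a' (phi i x) - b' by ring.
  have := ler_normD (dot a (phi i x) - dot a' (phi i x)) (b' - b).
  rewrite (distrC b' b).
  have := fK x Fx.
  move: hdot key hb Hn.
  set t1 := `|dot a (phi i x) - b|.
  set t2 := `|dot a (phi i x) - dot a' (phi i x)|.
  set t3 := `|b - b'|.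
  set t4 := `|dot a (phi i x) - dot a' (phi i x) + (b' - b)|.
  set t5 := `|dot a' (phi i x) - b'|.
  clearbody t1 t2 t3 t4 t5 eta del.
  move=> h1 h2 h3 h4 h5 h6 h7.
  have L : forall (u1 u2 u3 u4 u5 p q e dl iv : R), u2 <= p -> p + e = q ->
    u3 < e -> iv < q -> dl = q + q -> dl < u1 -> u4 <= u2 + u3 -> u1 - u4 <= u5 -> iv < u5.
    by move=> *; lra.
  apply: (L _ _ _ _ _ _ _ _ _ _ h1 h2 h3 h4 _ h5 h6 h7).
  exact: splitr.
have [N HN] : exists N, P `<=` (W N)°.
  apply: cover_nat => //; first by move=> n; exact: open_interior.
  by move=> n m nm; apply: interiorS; exact: Wmono.
pose del : R := (N.+1%:R)^-1.
have del0 : 0 < del by rewrite /del invr_gt0 ltr0Sn.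
have del1 : del <= 1 by rewrite /del invf_le1 ?ltr0Sn // ler1n.
pose c := del / (D + 1).
have D10 : 0 < D + 1 by rewrite ltr_pwDr.
have c0 : 0 < c by rewrite divr_gt0.
have cD : D * c < del.
  have -> : del = c * (D + 1) by rewrite /c; field; rewrite gt_eqF.
  nra.
have c1 : c <= 1.
  apply: le_trans del1; rewrite /c ler_pdivrMr //; nra.
exists c; split => // L [a [b [a0 ->]]].
have hL : affine_hyperplane [set x : 'rV[R]_d | \sum_(j < d) a 0 j * x 0 j = b].
  by exists a, b.
have [i0 _] := H _ hL.
pose s := `|(a : 'rV[R^o]_d)|.
have s0 : 0 < s by rewrite /s normr_gt0.
pose a' : 'rV[R^o]_d := s^-1 *: (a : 'rV[R^o]_d).
pose b' := s^-1 * b.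
have a'1 : `|a'| = 1.
  by rewrite /a' normrZ normfV normr_id mulVf // gt_eqF.
have ha' : forall j, `|a' 0 j| <= 1 by move=> j; rewrite -a'1; exact: entry_le_norm.
have Lz : forall z : 'rV[R]_d, \sum_(j < d) a 0 j * z 0 j = b -> dot a' z = b'.
  by move=> z hz; rewrite /a' dotZ /dot hz.
have near : forall y z : 'rV[R]_d, F y -> dot a' z = b' -> Defs.edist y z < c ->
    `|dot a' y - b'| < del /\ `|b'| <= B.
  move=> y z Fy hz hyz; split.
    rewrite -hz dotB; apply: le_lt_trans cD.
    apply: le_trans (dot_bound ha' (fun j => _ : `|(y - z) 0 j| <= Defs.edist y z)) _.
      by move=> j; rewrite !mxE; exact: edist_ge_entry.
    have h := ltW hyz; rewrite -/D; nra.
  have hzj : forall j, `|z 0 j| <= M + 1.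
    move=> j.
  have -> : z 0 j = y 0 j - (y 0 j - z 0 j) by ring.
  apply: le_trans (ler_normB _ _) _; apply: lerD; first exact: HM.
  apply: le_trans (edist_ge_entry _ _ j) _; apply: le_trans (ltW hyz) c1.
  rewrite -hz /B; apply: le_trans (dot_bound ha' hzj) _; by rewrite mul1r.
have [bB|bB] := leP `|b'| B.
  have [i Hi] : W N (a', b') by apply: interior_subset; apply: HN; split.
  exists i.
  rewrite -subset0 => y [[x Fx <-] [z Lz' hz]].
  have [h1 _] := near (phi i x) z (Hinv i _ (ex_intro2 _ _ x Fx erefl)) (Lz z Lz') hz.
  by have := Hi x Fx; rewrite ltNge (ltW h1).
exists i0; rewrite -subset0 => y [[x Fx <-] [z Lz' hz]].
have [_ h2] := near (phi i0 x) z (Hinv i0 _ (ex_intro2 _ _ x Fx erefl)) (Lz z Lz') hz.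
by move: bB; rewrite ltNge h2.
Qed.
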